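(* Let $N\ge1$ and let $W$ be the unitary on $\mathbb{C}^2\otimes\mathbb{C}^N$ given by the product (applied right to left) $$W=(H\otimes I_N)\,\check F_N^{2}\,(R\otimes I_N)\,\check F_N^{2}\,(I_2\otimes F_N)\,(H\otimes I_N),$$ where $\check F_N^2=I_N\oplus F_N^2$ is $F_N^2$ applied to the second register conditioned on the first (ancilla) qubit being $1$. Then for every vector $v\in\mathbb{C}^N$, $W(|0\rangle\otimes v)=|0\rangle\otimes A_N v$.
   Context: $F_N=\frac1{\sqrt N}[\omega^{jk}]_{j,k=0,\dots,N-1}$ with $\omega=e^{2\pi i/N}$ is the unitary discrete Fourier transform. The discrete Hartley transform is $A_N=\frac1{\sqrt N}[\mathrm{cas}(2\pi jk/N)]_{j,k=0,\dots,N-1}$ where $\mathrm{cas}(t)=\cos t+\sin t$. $H=\frac1{\sqrt2}\begin{pmatrix}1&1\\1&-1\end{pmatrix}$, $R=\frac12\begin{pmatrix}1-i&1+i\\1+i&1-i\end{pmatrix}$, $I_N$ the identity; $I_N\oplus F_N^2$ is block-diagonal in the basis $|0\rangle\otimes e_k,\ |1\rangle\otimes e_k$. *)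

(* Defs.v *)
From mathcomp Require Import all_boot all_order all_algebra.
From mathcomp Require Import complex.
From mathcomp Require Import reals trigo.
Set Implicit Arguments. Unset Strict Implicit. Unset Printing Implicit Defensive.
Import Order.TTheory GRing.Theory Num.Theory.
Local Open Scope ring_scope.

Section Defs.
Variable R : realType.
Local Notation C := R[i].

Definition cr (x : R) : C := Complex x 0.

Definition omega (N : nat) : C :=
  Complex (cos (2 * pi / N%:R)) (sin (2 * pi / N%:R)).

Definition DFT (N : nat) : 'M[C]_N :=
  \matrix_(j, k) ((cr (Num.sqrt N%:R))^-1 * omega N ^+ (j * k)%N).

Definition cas (t : R) : R := cos t + sin t.

Definition DHT (N : nat) : 'M[C]_N :=
  \matrix_(j, k)
     ((cr (Num.sqrt N%:R))^-1 * cr (cas (2 * pi * (j * k)%N%:R / N%:R))).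

Definition Hgate : 'M[C]_2 :=
  \matrix_(i < 2, j < 2)
    ((cr (Num.sqrt 2))^-1 * (if (i == 1%N :> nat) && (j == 1%N :> nat) then -1 else 1)).

Definition Rgate : 'M[C]_2 :=
  \matrix_(i < 2, j < 2)
    (if i == j :> nat then Complex (1 / 2) (- (1 / 2)) else Complex (1 / 2) (1 / 2)).

(* M (x) A on C^2 (x) C^N, ordered basis |0>(x)e_k (first block), |1>(x)e_k *)
Definition tens2 (N : nat) (M : 'M[C]_2) (A : 'M[C]_N) : 'M[C]_(N + N) :=
  block_mx (M 0 0 *: A) (M 0 1 *: A) (M 1 0 *: A) (M 1 1 *: A).

Definition ctrl (N : nat) (U : 'M[C]_N) : 'M[C]_(N + N) :=
  block_mx 1%:M 0 0 U.

Definition ket0 (N : nat) (v : 'cV[C]_N) : 'cV[C]_(N + N) := col_mx v 0.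

Definition Wcirc (N : nat) : 'M[C]_(N + N) :=
  tens2 Hgate 1%:M *m ctrl (DFT N *m DFT N) *m tens2 Rgate 1%:M
  *m ctrl (DFT N *m DFT N) *m tens2 1%:M (DFT N) *m tens2 Hgate 1%:M.

End Defs.

(* Main.v *)
Require Import Defs.
From mathcomp Require Import all_boot all_order all_algebra.
From mathcomp Require Import complex.
From mathcomp Require Import reals trigo.
Local Open Scope ring_scope.

From mathcomp Require Import ring lra.
Set Warnings "-notation-overridden,-ambiguous-paths".
Set Implicit Arguments. Unset Strict Implicit. Unset Printing Implicit Defensive.
Import Order.TTheory GRing.Theory Num.Theory.
Local Open Scope ring_scope.
Section S.
Variable R : realType.
Variable N : nat.
Hypothesis hN : (1 <= N)%N.
Let t : R := 2 * pi / N%:R.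

Lemma omegaX m : omega R N ^+ m = Complex (cos (m%:R * t)) (sin (m%:R * t)).
Proof.
elim: m => [|m IH]; first by rewrite expr0 mul0r cos0 sin0.
rewrite exprS IH /omega -/t /=.
rewrite -[m.+1]addn1 natrD mulrDl mul1r addrC cosD sinD.
apply/eqP; rewrite eq_complex /=; apply/andP; split; apply/eqP; ring.
Qed.
End S.

Section S.
Variable R : realType.
Variable N : nat.
Hypothesis hN : (1 <= N)%N.

Lemma Nneq0 : N%:R != 0 :> R.
Proof. by rewrite pnatr_eq0 -lt0n. Qed.

Lemma omegaN : omega R N ^+ N = 1.
Proof.
rewrite omegaX mulrCA mulfV ?Nneq0 // mulr1 mulr_natl.
by rewrite cos2pi sin2pi.
Qed.

Lemma not1 (x : R) : 0 < x -> x < pi *+ 2 -> Complex (cos x) (sin x) != 1.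
Proof.
move=> x0 x2; apply/negP=> /eqP[c1 s0].
have hp := pi_gt0 R.
case: (ltrgtP x pi) => hx.
- by have := sin_gt0_pi (x := x); rewrite x0 hx s0 ltxx => /(_ isT).
- have h1 : 0 < x - pi < pi by rewrite subr_gt0 hx /= ltrBlDr -mulr2n.
  have := sin_gt0_pi h1.
  have : sin x = - sin (x - pi) by rewrite -[in LHS](subrK pi x) sinDpi.
  by rewrite s0 => /eqP; rewrite eq_sym oppr_eq0 => /eqP ->; rewrite ltxx.
- by move: c1; rewrite hx cospi; lra.
Qed.

Lemma omega_prim : N.-primitive_root (omega R N).
Proof.
apply/andP; split=> //; apply/forallP=> i; rewrite unity_rootE.
case: (ltngtP i.+1 N) => hi.
- rewrite omegaX eqbF_neg; apply: not1.
    by rewrite mulr_gt0 // divr_gt0 ?ltr0n // mulr_gt0 // pi_gt0.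
  have -> : i.+1%:R * (2 * pi / N%:R) = (i.+1%:R / N%:R) * (pi *+ 2) :> R.
    by rewrite mulr2n; ring.
  have p2 : 0 < pi *+ 2 :> R by rewrite mulrn_wgt0 // pi_gt0.
  rewrite -ltr_pdivlMr // divff ?gt_eqF //.
  rewrite ltr_pdivrMr ?ltr0n ?(leq_trans _ hi) // mul1r ltr_nat.
  exact hi.
- by have := leq_ltn_trans (ltn_ord i) hi; rewrite ltnn.
- by rewrite hi omegaN eqxx.
Qed.
End S.

Section S.
Variable R : realType.
Local Notation C := R[i].
Variable N : nat.
Hypothesis hN : (1 <= N)%N.
Let w := omega R N.
Let c : C := (cr (Num.sqrt N%:R))^-1.

Lemma geo (z : C) : z ^+ N = 1 -> \sum_(l < N) z ^+ l = if z == 1 then N%:R else 0.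
Proof.
move=> zN; case: eqP => [->|/eqP z1].
  by rewrite (eq_bigr (fun _ => 1)) ?sumr_const ?card_ord // => l _; rewrite expr1n.
have := subrX1 z N; rewrite zN subrr => /esym/eqP; rewrite mulf_eq0 subr_eq0 (negbTE z1).
by move/eqP.
Qed.

Lemma crE x : cr x = real_complex R x. Proof. by []. Qed.

Lemma cc : c * c * N%:R = 1.
Proof.
rewrite /c -invfM !crE -rmorphM -expr2 sqr_sqrtr ?ler0n //.
rewrite -[N%:R as X in _ * X](rmorph_nat (real_complex R)) mulVf //.
by rewrite (inj_eq (@complexI _)) Nneq0.
Qed.

Definition G : 'M[C]_N := \matrix_(j, k) (c * w^-1 ^+ (j * k)%N).

Lemma wprim : N.-primitive_root w. Proof. exact: omega_prim. Qed.
Lemma wN : w ^+ N = 1. Proof. exact: omegaN. Qed.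
Lemma wneq0 : w != 0.
Proof. by rewrite (prim_root_eq0 wprim) -lt0n. Qed.

Lemma FG : DFT R N *m G = 1%:M.
Proof.
apply/matrixP => j k; rewrite !mxE.
under eq_bigr => l _ do rewrite !mxE -/w -/c (mulnC l k) !exprM mulrACA -exprMn.
rewrite -big_distrr /= geo; last first.
  by rewrite exprMn -!exprM !(mulnC _ N) !exprM exprVn wN invr1 !expr1n mulr1.
have -> : (w ^+ j * w^-1 ^+ k == 1) = (j == k).
  have nz : w ^+ k != 0 by rewrite expf_neq0 // wneq0.
  rewrite exprVn (can2_eq (divfK nz) (mulfK nz)) mul1r.
  by rewrite (eq_prim_root_expr wprim) !modn_small.
by case: eqP => _; rewrite ?mulr0 // cc.
Qed.

Lemma FFGG : DFT R N *m DFT R N = G *m G.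
Proof.
apply/matrixP => j k; rewrite !mxE.
under eq_bigr => l _ do rewrite !mxE -/w -/c (mulnC l k) !exprM mulrACA -exprMn -exprD.
under [RHS]eq_bigr => l _ do rewrite !mxE -/w -/c (mulnC l k) !exprM mulrACA -exprMn -exprD.
have h1 : (w ^+ (j + k)) ^+ N = 1 by rewrite -exprM mulnC exprM wN expr1n.
rewrite -!big_distrr /= geo // geo; first by rewrite exprVn invr_eq1.
by rewrite !exprVn h1 invr1.
Qed.

Lemma GF : G *m DFT R N = 1%:M. Proof. exact: mulmx1C FG. Qed.

Lemma F3 : DFT R N *m (DFT R N *m DFT R N) = G.
Proof. by rewrite mulmxA FFGG -mulmxA GF mulmx1. Qed.

Lemma F5 : DFT R N *m DFT R N *m (DFT R N *m DFT R N *m DFT R N) = DFT R N.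
Proof. by rewrite -!mulmxA F3 FG mulmx1. Qed.

Lemma winv m x : x = m%:R * (2 * pi / N%:R) ->
  (w ^+ m)^-1 = Complex (cos x) (- sin x).
Proof.
move=> ->; have nz : w ^+ m != 0 by rewrite expf_neq0 // wneq0.
rewrite -[(w ^+ m)^-1]mulr1.
have <- : w ^+ m * Complex (cos (m%:R * (2 * pi / N%:R))) (- sin (m%:R * (2 * pi / N%:R))) = 1.
  rewrite /w omegaX; apply/eqP; rewrite eq_complex /=; apply/andP; split; apply/eqP.
    set y := m%:R * (2 * pi / N%:R).
    by have := cos2Dsin2 y; rewrite !expr2 => <-; ring.
  by ring.
by rewrite mulKf.
Qed.

Lemma DHTE : DHT R N = Complex (1/2) (- (1/2)) *: DFT R N + Complex (1/2) (1/2) *: G.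
Proof.
apply/matrixP => j k; rewrite !mxE -/c -/w exprVn.
set x := 2 * pi * (j * k)%N%:R / N%:R.
rewrite (winv (x := x)); last by rewrite /x; ring.
rewrite /w omegaX.
have -> : (j * k)%N%:R * (2 * pi / N%:R) = x by rewrite /x; ring.
rewrite !(mulrCA _ c) -mulrDr; congr (_ * _).
apply/eqP; rewrite eq_complex /= /cas; apply/andP; split; apply/eqP.
  all: lra.
Qed.
End S.

Lemma final_abs (K : comNzRingType) n (F G : 'M[K]_n) (v : 'cV[K]_n) (a b h : K) :
  F *m F *m F = G -> F *m F *m G = F -> h * h * 2 = 1 ->
  col_mx
    (h *:
     (a *: (F *m (h *: v)) + b *: (F *m F *m (F *m (h *: v))) +
      F *m F *m (b *: (F *m (h *: v)) + a *: (F *m F *m (F *m (h *: v))))))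
    (h *:
     (a *: (F *m (h *: v)) + b *: (F *m F *m (F *m (h *: v))) -
      F *m F *m (b *: (F *m (h *: v)) + a *: (F *m F *m (F *m (h *: v)))))) =
  col_mx ((a *: F + b *: G) *m v) 0.
Proof.
move=> e1 e2 hh.
have e3 : F *m F *m (F *m v) = G *m v by rewrite mulmxA e1.
have e4 : F *m F *m (G *m v) = F *m v by rewrite mulmxA e2.
rewrite -!scalemxAr !mulmxDr -!scalemxAr e3 e4 mulmxDl -!scalemxAl.
move: (F *m v) (G *m v) => X Y.
congr col_mx; apply/matrixP => i j; rewrite !mxE.
  transitivity ((h * h * 2) * (a * X i j + b * Y i j)); first by ring.
  by rewrite hh mul1r.
by ring.
Qed.

Lemma tens2_col (R : realType) N (M : 'M[R[i]]_2) (A : 'M[R[i]]_N) (x y : 'cV[R[i]]_N) :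
  tens2 M A *m col_mx x y =
  col_mx (M 0 0 *: (A *m x) + M 0 1 *: (A *m y)) (M 1 0 *: (A *m x) + M 1 1 *: (A *m y)).
Proof. by rewrite /tens2 mul_block_col -!scalemxAl. Qed.

Lemma ctrl_col (R : realType) N (U : 'M[R[i]]_N) (x y : 'cV[R[i]]_N) :
  ctrl U *m col_mx x y = col_mx x (U *m y).
Proof. by rewrite /ctrl mul_block_col mul1mx !mul0mx addr0 add0r. Qed.

Section M.
Variable R : realType.
Local Notation C := R[i].
Variable N : nat.
Let h := (cr (Num.sqrt 2))^-1 : R[i].
Let a := Complex (1 / 2) (- (1 / 2)) : R[i].
Let b := Complex (1 / 2) (1 / 2) : R[i].

Lemma tensH_col (x y : 'cV[C]_N) :
  tens2 (Hgate R) 1%:M *m col_mx x y = col_mx (h *: (x + y)) (h *: (x - y)).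
Proof.
rewrite tens2_col !mul1mx !mxE /= !mulr1 mulrN1 -/h.
by rewrite scalerDr scalerBr scaleNr.
Qed.

Lemma tensR_col (x y : 'cV[C]_N) :
  tens2 (Rgate R) 1%:M *m col_mx x y = col_mx (a *: x + b *: y) (b *: x + a *: y).
Proof. by rewrite tens2_col !mul1mx !mxE. Qed.

Lemma tensF_col (F : 'M[C]_N) (x y : 'cV[C]_N) :
  tens2 1%:M F *m col_mx x y = col_mx (F *m x) (F *m y).
Proof. by rewrite tens2_col !mxE /= !scale1r !scale0r addr0 add0r. Qed.
End M.

Unset Implicit Arguments.
Theorem mainTheorem6 (R : realType) (N : nat) (hN : (1 <= N)%N)
  (v : 'cV[R[i]]_N) :
  Wcirc R N *m ket0 v = ket0 (DHT R N *m v).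
Proof.
rewrite /Wcirc /ket0 -!mulmxA tensH_col tensF_col ctrl_col tensR_col ctrl_col tensH_col.
rewrite (addr0 v) (subr0 v) (@DHTE R N hN).
set F := DFT R N.
set G := G R N.
set h := (cr (Num.sqrt 2))^-1.
set a := Complex _ _.
set b := Complex _ _.
rewrite {}/F {}/G.
apply: final_abs.
- by rewrite -mulmxA (@F3 R N hN).
- by rewrite -(@F3 R N hN) -[RHS](@F5 R N hN) !mulmxA.
- rewrite /h -invfM crE -rmorphM -expr2 sqr_sqrtr ?ler0n //.
  rewrite -[2 as X in _ * X](rmorph_nat (real_complex R)) mulVf //.
  by rewrite (inj_eq (@complexI _)) pnatr_eq0.
Qed.
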